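(* Let $\alpha_2,\alpha_3,k$ be positive integers with $\alpha_2,\alpha_3$ coprime, and let $X_1=\{x+x^ky^{k-1}+z^{\alpha_2}+t^{\alpha_3}=0\}\subset\mathbb{A}^4=\mathrm{Spec}(\mathbb{C}[x,y,z,t])$ with the $\mathbb{G}_m$-action induced by $\lambda\cdot(x,y,z,t)=(\lambda^{\alpha_2\alpha_3}x,\lambda^{-\alpha_2\alpha_3}y,\lambda^{\alpha_3}z,\lambda^{\alpha_2}t)$. Let $d\ge2$ be an integer with $d\alpha_3$ and $\alpha_2$ coprime, and let $X_2=\{x+y^{d-1}(x^d+z^{\alpha_2})+t^{\alpha_3}=0\}\subset\mathbb{A}^4$ with the $\mathbb{G}_m$-action induced by $\lambda\cdot(x,y,z,t)=(\lambda^{\alpha_2\alpha_3}x,\lambda^{-\alpha_2\alpha_3}y,\lambda^{d\alpha_3}z,\lambda^{\alpha_2}t)$. Then $X_1$ and $X_2$ are $\mathbb{G}_m$-linearly rational.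
   Context: Each of these hyperbolic $\mathbb{G}_m$-varieties has the origin as its unique fixed point. A $\mathbb{G}_m$-variety with a unique fixed point $x_0$ is $\mathbb{G}_m$-linearly rational if there exist a $\mathbb{G}_m$-stable open neighborhood $U$ of $x_0$, a linear $\mathbb{G}_m$-representation $V\simeq\mathbb{A}^n$ and a $\mathbb{G}_m$-stable open subset $U'\subset V$ such that $U$ is $\mathbb{G}_m$-equivariantly isomorphic to $U'$. *)

(* Defs.v *)
(* classical (quasi-)affine varieties over an algebraically
   closed field, described by their closed points, with Zariski-open subsets
   and regular maps in the sense of Hartshorne I.3. *)
From HB Require Import structures.
From mathcomp Require Import all_boot all_order all_algebra.
From mathcomp Require Import complex Rstruct.
From mathcomp Require Import mpoly.
Set Implicit Arguments. Unset Strict Implicit. Unset Printing Implicit Defensive.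
Import Order.TTheory GRing.Theory Num.Theory.
Local Open Scope ring_scope.

Definition CC : closedFieldType := (Rdefinitions.R)[i].

Section Varieties.
Variable K : fieldType.

Definition pt (n : nat) := 'I_n -> K.

Definition Zset n (P : seq {mpoly K[n]}) : pt n -> Prop :=
  fun x => forall p, p \in P -> p.@[x] = 0.

Definition open_in n (X U : pt n -> Prop) : Prop :=
  exists Q : seq {mpoly K[n]},
    forall x, U x <-> (X x /\ exists2 q, q \in Q & q.@[x] != 0).

Definition regular_on n m (U : pt n -> Prop) (f : pt n -> pt m) : Prop :=
  forall p, U p -> exists (g : 'I_m -> {mpoly K[n]}) (h : {mpoly K[n]}),
    h.@[p] != 0 /\
    forall x, U x -> h.@[x] != 0 -> forall i, f x i = (g i).@[x] / h.@[x].

Definition var_iso n m (U : pt n -> Prop) (U' : pt m -> Prop)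
    (f : pt n -> pt m) (g : pt m -> pt n) : Prop :=
  [/\ forall x, U x -> U' (f x), forall y, U' y -> U (g y),
      regular_on U f & regular_on U' g] /\
  (forall x, U x -> g (f x) = x) /\ (forall y, U' y -> f (g y) = y).

Definition diag_act n (w : 'I_n -> int) (l : K) (x : pt n) : pt n :=
  fun i => l ^ (w i) * x i.

Definition lin_rep m (rho : K -> 'M[K]_m) : Prop :=
  [/\ (exists (P : 'I_m -> 'I_m -> {poly K}) (N : nat),
         forall l, l != 0 -> forall i j, rho l i j = (P i j).[l] / l ^+ N),
      rho 1 = 1%:M &
      forall l l', l != 0 -> l' != 0 -> rho (l * l') = rho l *m rho l'].

Definition rep_act m (rho : K -> 'M[K]_m) (l : K) (x : pt m) : pt m :=
  fun i => \sum_(j < m) rho l i j * x j.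

Definition Gm_stable n (act : K -> pt n -> pt n) (U : pt n -> Prop) : Prop :=
  forall l x, l != 0 -> U x -> U (act l x).

Definition Gm_linearly_rational n (P : seq {mpoly K[n]}) (w : 'I_n -> int)
    (x0 : pt n) : Prop :=
  exists U : pt n -> Prop,
    [/\ open_in (Zset P) U, U x0, Gm_stable (diag_act w) U &
    exists (m : nat) (rho : K -> 'M[K]_m) (U' : pt m -> Prop)
           (f : pt n -> pt m) (g : pt m -> pt n),
      [/\ lin_rep rho, open_in (fun _ => True) U',
          Gm_stable (rep_act rho) U', var_iso U U' f g &
          forall l x, l != 0 -> U x -> f (diag_act w l x) = rep_act rho l (f x)]].

End Varieties.

Definition i0 : 'I_4 := @Ordinal 4 0 isT.
Definition i1 : 'I_4 := @Ordinal 4 1 isT.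
Definition i2 : 'I_4 := @Ordinal 4 2 isT.
Definition i3 : 'I_4 := @Ordinal 4 3 isT.
Definition vx : {mpoly CC[4]} := 'X_i0.
Definition vy : {mpoly CC[4]} := 'X_i1.
Definition vz : {mpoly CC[4]} := 'X_i2.
Definition vt : {mpoly CC[4]} := 'X_i3.

Definition origin4 : pt CC 4 := fun _ => 0.

Definition weights4 (a b c e : int) : 'I_4 -> int :=
  fun i => match val i with 0 => a | 1 => b | 2 => c | _ => e end.

Definition X1_eq (a2 a3 k : nat) : {mpoly CC[4]} :=
  vx + vx ^+ k * vy ^+ k.-1 + vz ^+ a2 + vt ^+ a3.
Definition X1_weights (a2 a3 : nat) : 'I_4 -> int :=
  weights4 (a2 * a3)%N%:Z (- (a2 * a3)%N%:Z) a3%:Z a2%:Z.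

Definition X2_eq (a2 a3 d : nat) : {mpoly CC[4]} :=
  vx + vy ^+ d.-1 * (vx ^+ d + vz ^+ a2) + vt ^+ a3.
Definition X2_weights (a2 a3 d : nat) : 'I_4 -> int :=
  weights4 (a2 * a3)%N%:Z (- (a2 * a3)%N%:Z) (d * a3)%N%:Z a2%:Z.

(* Main.v *)
Require Import Defs.
From HB Require Import structures.
From mathcomp Require Import all_boot all_order all_algebra.
From mathcomp Require Import complex Rstruct.
From mathcomp Require Import mpoly.
From mathcomp Require Import ring zify.
From Stdlib Require Import FunctionalExtensionality.
Import GRing.Theory Num.Theory.
Local Open Scope ring_scope.

Definition j0 : 'I_3 := @Ordinal 3 0 isT.
Definition j1 : 'I_3 := @Ordinal 3 1 isT.
Definition j2 : 'I_3 := @Ordinal 3 2 isT.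

Definition mk3 (a b c : CC) : pt CC 3 :=
  fun i => match val i with 0 => a | 1 => b | _ => c end.
Definition mk4 (a b c e : CC) : pt CC 4 :=
  fun i => match val i with 0 => a | 1 => b | 2 => c | _ => e end.

Lemma ord3 (P : 'I_3 -> Prop) : P j0 -> P j1 -> P j2 -> forall i, P i.
Proof.
move=> H0 H1 H2 [[|[|[|i]]] Hi].
- by have -> : Ordinal Hi = j0 by apply: val_inj.
- by have -> : Ordinal Hi = j1 by apply: val_inj.
- by have -> : Ordinal Hi = j2 by apply: val_inj.
- by [].
Qed.

Lemma ord4 (P : 'I_4 -> Prop) : P i0 -> P i1 -> P i2 -> P i3 -> forall i, P i.
Proof.
move=> H0 H1 H2 H3 [[|[|[|[|i]]]] Hi].
- by have -> : Ordinal Hi = i0 by apply: val_inj.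
- by have -> : Ordinal Hi = i1 by apply: val_inj.
- by have -> : Ordinal Hi = i2 by apply: val_inj.
- by have -> : Ordinal Hi = i3 by apply: val_inj.
- by [].
Qed.

Lemma eq3 (x y : pt CC 3) : x j0 = y j0 -> x j1 = y j1 -> x j2 = y j2 -> x = y.
Proof. by move=> *; apply: functional_extensionality; apply: ord3. Qed.

Lemma eq4 (x y : pt CC 4) :
  x i0 = y i0 -> x i1 = y i1 -> x i2 = y i2 -> x i3 = y i3 -> x = y.
Proof. by move=> *; apply: functional_extensionality; apply: ord4. Qed.

Definition rhow {m} (w : 'I_m -> int) (l : CC) : 'M[CC]_m := diag_mx (\row_i l ^ w i).

Lemma rep_act_rhow m w l x : rep_act (@rhow m w) l x = diag_act w l x.
Proof.
apply: functional_extensionality => i; rewrite /rep_act /diag_act.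
rewrite (bigD1 i) //= big1 ?addr0; first by rewrite /rhow !mxE eqxx mulr1n.
by move=> j hj; rewrite /rhow !mxE eq_sym (negbTE hj) mulr0n mul0r.
Qed.

Lemma lin_rep_rhow m (w : 'I_m -> int) (N : nat) :
  (forall i, (0 <= w i + N%:Z)%R) -> lin_rep (rhow w).
Proof.
move=> hw; split.
- pose e i := absz (w i + N%:Z)%R.
  exists (fun i j => if i == j then 'X^(e i) else 0), N => l l0 i j.
  rewrite /rhow !mxE; case: eqP => [->|_]; last by rewrite mulr0n horner0 mul0r.
  rewrite mulr1n hornerXn /e.
  idtac.
  have -> : l ^+ absz (w j + N%:Z)%R = l ^ (w j + N%:Z).
    by rewrite exprnP gez0_abs.
  rewrite expfzDr //; have -> : l ^ (N%:Z) = l ^+ N by [].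
  by field; rewrite expf_neq0.
- by rewrite /rhow -diag_const_mx; congr diag_mx; apply/rowP => i; rewrite !mxE exp1rz.
- move=> l l' _ _; rewrite /rhow mulmx_diag; congr diag_mx; apply/rowP => i.
  by rewrite !mxE expfzMl.
Qed.

Lemma Zset1 n (p : {mpoly CC[n]}) x : Zset [:: p] x <-> p.@[x] = 0.
Proof.
split => [H|H q]; first exact: H (mem_head _ _).
by rewrite inE => /eqP ->.
Qed.

Lemma GLR_intro (P : seq {mpoly CC[4]}) (w : 'I_4 -> int) (w3 : 'I_3 -> int) (N : nat)
  (c : {mpoly CC[4]}) (c' : {mpoly CC[3]}) (f : pt CC 4 -> pt CC 3) (g : pt CC 3 -> pt CC 4)
  (h : {mpoly CC[4]}) (F : 'I_3 -> {mpoly CC[4]}) (h' : {mpoly CC[3]})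
  (G : 'I_4 -> {mpoly CC[3]}) :
  (forall i, (0 <= w3 i + N%:Z)%R) ->
  Zset P origin4 -> c.@[origin4] != 0 ->
  (forall l x, l != 0 -> Zset P x -> Zset P (diag_act w l x)) ->
  (forall l x, l != 0 -> c.@[diag_act w l x] = c.@[x]) ->
  (forall l v, l != 0 -> c'.@[diag_act w3 l v] = c'.@[v]) ->
  (forall x, Zset P x -> c.@[x] != 0 -> c'.@[f x] != 0) ->
  (forall v, c'.@[v] != 0 -> Zset P (g v) /\ c.@[g v] != 0) ->
  (forall x, c.@[x] != 0 -> h.@[x] != 0 /\ forall i, f x i = (F i).@[x] / h.@[x]) ->
  (forall v, c'.@[v] != 0 -> h'.@[v] != 0 /\ forall i, g v i = (G i).@[v] / h'.@[v]) ->
  (forall x, Zset P x -> c.@[x] != 0 -> g (f x) = x) ->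
  (forall v, c'.@[v] != 0 -> f (g v) = v) ->
  (forall l x, l != 0 -> Zset P x -> c.@[x] != 0 ->
     f (diag_act w l x) = diag_act w3 l (f x)) ->
  Gm_linearly_rational P w origin4.
Proof.
move=> hw Z0 c0 stX stc stc' fU' gU regf regg gf fg eqv.
exists (fun x => Zset P x /\ c.@[x] != 0); split.
- exists [:: c] => x; split=> [[hx hc]|[hx [q]]].
    by split=> //; exists c; rewrite ?mem_head.
  by rewrite inE => /eqP ->.
- by [].
- by move=> l x l0 [hx hc]; split; [exact: stX | rewrite stc].
- exists 3%N, (rhow w3), (fun v => c'.@[v] != 0), f, g; split.
  + exact (@lin_rep_rhow 3 w3 N hw).
  + exists [:: c'] => v; split=> [hv|[_ [q]]].
      by split=> //; exists c'; rewrite ?mem_head.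
    by rewrite inE => /eqP ->.
  + by move=> l v l0 hv; rewrite rep_act_rhow stc'.
  + split; [split | split].
    * by move=> x [] ; apply: fU'.
    * exact: gU.
    * move=> p [_ hp]; exists F, h; have [hh E] := regf p hp; split=> // x [_ hx] _ i.
      by case: (regf x hx).
    * move=> p hp; exists G, h'; have [hh E] := regg p hp; split=> // x hx _ i.
      by case: (regg x hx).
    * by move=> x []; apply: gf.
    * exact: fg.
  + by move=> l x l0 [hx hc]; rewrite rep_act_rhow eqv.
Qed.

Lemma dA n (w : 'I_n -> int) l (x : pt CC n) i : diag_act w l x i = l ^ (w i) * x i.
Proof. by []. Qed.

Lemma expPos (l : CC) (n : nat) : l ^ (n%:Z) = l ^+ n.
Proof. by []. Qed.

Lemma expNeg (l : CC) (n : nat) : l ^ (- (n%:Z)) = (l ^+ n)^-1.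
Proof. by rewrite -exprnN. Qed.

Lemma mk3_0 a b c : mk3 a b c j0 = a. Proof. by []. Qed.
Lemma mk3_1 a b c : mk3 a b c j1 = b. Proof. by []. Qed.
Lemma mk3_2 a b c : mk3 a b c j2 = c. Proof. by []. Qed.
Lemma mk4_0 a b c e : mk4 a b c e i0 = a. Proof. by []. Qed.
Lemma mk4_1 a b c e : mk4 a b c e i1 = b. Proof. by []. Qed.
Lemma mk4_2 a b c e : mk4 a b c e i2 = c. Proof. by []. Qed.
Lemma mk4_3 a b c e : mk4 a b c e i3 = e. Proof. by []. Qed.
Ltac mk := rewrite ?(mk3_0, mk3_1, mk3_2, mk4_0, mk4_1, mk4_2, mk4_3).

Lemma expM' (l z : CC) (a b : nat) : (l ^+ a * z) ^+ b = l ^+ (b * a) * z ^+ b.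
Proof. by rewrite exprMn -exprM mulnC. Qed.

Definition w3of (a b c : int) : 'I_3 -> int :=
  fun i => match val i with 0 => a | 1 => b | _ => c end.

Lemma mevalXn n (v : 'I_n -> CC) (p : {mpoly CC[n]}) m : (p ^+ m).@[v] = p.@[v] ^+ m.
Proof. exact: rmorphXn. Qed.

Ltac nz := repeat (match goal with |- is_true (_ && _) => apply/andP; split end);
  repeat (apply: mulf_neq0); repeat (apply: expf_neq0); try assumption.

Ltac mev := rewrite ?(mevalD, mevalB, mevalN, mevalM, meval1, mevalXU, mevalXn, mevalC).

Section X1.
Variables (a2 a3 k : nat).
Hypotheses (a2p : (0 < a2)%N) (a3p : (0 < a3)%N).

Let N := (a2 * a3)%N.
Definition s3 (v : pt CC 3) := v j1 ^+ a2 + v j2 ^+ a3.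
Definition C1 (x : pt CC 4) := 1 + (x i0 * x i1) ^+ k.
Definition C1' (v : pt CC 3) := 1 + (- (v j0 * s3 v)) ^+ k.
Definition f1 (x : pt CC 4) := mk3 (x i1 / C1 x) (x i2) (x i3).
Definition g1 (v : pt CC 3) := mk4 (- s3 v / C1' v) (v j0 * C1' v) (v j1) (v j2).
Definition cP1 : {mpoly CC[4]} := 1 + ('X_i0 * 'X_i1) ^+ k.
Definition sP1 : {mpoly CC[3]} := 'X_j1 ^+ a2 + 'X_j2 ^+ a3.
Definition cP1' : {mpoly CC[3]} := 1 + (- ('X_j0 * sP1)) ^+ k.
Definition F1 (i : 'I_3) : {mpoly CC[4]} :=
  match val i with 0 => 'X_i1 | 1 => 'X_i2 * cP1 | _ => 'X_i3 * cP1 end.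
Definition G1 (i : 'I_4) : {mpoly CC[3]} :=
  match val i with 0 => - sP1 | 1 => 'X_j0 * cP1' ^+ 2 | 2 => 'X_j1 * cP1'
  | _ => 'X_j2 * cP1' end.

Lemma cP1E x : cP1.@[x] = C1 x.
Proof. by rewrite /cP1; mev. Qed.
Lemma cP1'E v : cP1'.@[v] = C1' v.
Proof. by rewrite /cP1' /sP1; mev. Qed.

Lemma X1E x : (X1_eq a2 a3 k.+1).@[x] = x i0 * C1 x + (x i2 ^+ a2 + x i3 ^+ a3).
Proof.
rewrite /X1_eq /vx /vy /vz /vt /=; mev.
rewrite /C1 exprS exprMn; ring.
Qed.


Let w1 := X1_weights a2 a3.
Let w13 := w3of (- (N%:Z)) (a3%:Z) (a2%:Z).

Lemma d1_0 (l : CC) (x : pt CC 4) : diag_act w1 l x i0 = l ^+ N * x i0. Proof. by []. Qed.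
Lemma d1_1 (l : CC) (x : pt CC 4) : diag_act w1 l x i1 = (l ^+ N)^-1 * x i1.
Proof. by rewrite dA; change (w1 i1) with (- (N%:Z)); rewrite expNeg. Qed.
Lemma d1_2 (l : CC) (x : pt CC 4) : diag_act w1 l x i2 = l ^+ a3 * x i2. Proof. by []. Qed.
Lemma d1_3 (l : CC) (x : pt CC 4) : diag_act w1 l x i3 = l ^+ a2 * x i3. Proof. by []. Qed.
Lemma d13_0 (l : CC) (v : pt CC 3) : diag_act w13 l v j0 = (l ^+ N)^-1 * v j0.
Proof. by rewrite dA; change (w13 j0) with (- (N%:Z)); rewrite expNeg. Qed.
Lemma d13_1 (l : CC) (v : pt CC 3) : diag_act w13 l v j1 = l ^+ a3 * v j1. Proof. by []. Qed.
Lemma d13_2 (l : CC) (v : pt CC 3) : diag_act w13 l v j2 = l ^+ a2 * v j2. Proof. by []. Qed.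
Ltac dd := rewrite ?(d1_0, d1_1, d1_2, d1_3, d13_0, d13_1, d13_2).

Lemma C1_act (l : CC) (x : pt CC 4) : l != 0 -> C1 (diag_act w1 l x) = C1 x.
Proof.
move=> l0; rewrite /C1; dd.
have LN : l ^+ N != 0 by rewrite expf_neq0.
by congr (1 + _ ^+ _); field.
Qed.

Lemma s3_act (l : CC) (v : pt CC 3) : s3 (diag_act w13 l v) = l ^+ N * s3 v.
Proof. by rewrite /s3; dd; rewrite !expM' [(a3 * a2)%N]mulnC -mulrDr. Qed.

Lemma C1'_act l v : l != 0 -> C1' (diag_act w13 l v) = C1' v.
Proof.
move=> l0; rewrite /C1' s3_act; dd.
have LN : l ^+ N != 0 by rewrite expf_neq0.
by congr (1 + (- _) ^+ _); field.
Qed.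

Let X1 := [:: X1_eq a2 a3 k.+1].

Lemma X1_stab (l : CC) (x : pt CC 4) : l != 0 -> Zset X1 x -> Zset X1 (diag_act w1 l x).
Proof.
move=> l0 /Zset1 H; apply/Zset1; move: H; rewrite !X1E C1_act //; dd.
rewrite !expM' [(a3 * a2)%N]mulnC => H.
have -> : l ^+ (a2 * a3) = l ^+ N by [].
by rewrite -mulrA -!mulrDr H mulr0.
Qed.

Lemma hs1 (x : pt CC 4) : Zset X1 x -> x i2 ^+ a2 + x i3 ^+ a3 = - (x i0 * C1 x).
Proof.
by move=> /Zset1; rewrite X1E => H; apply/eqP; rewrite -addr_eq0 addrC H.
Qed.

Lemma C1'f1 x : Zset X1 x -> C1 x != 0 -> C1' (f1 x) = C1 x.
Proof.
move=> hx hc; rewrite /C1' /s3 /f1; mk; rewrite hs1 //.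
by rewrite /C1; congr (1 + _ ^+ _); field.
Qed.

Lemma C1g1 (v : pt CC 3) : C1' v != 0 -> C1 (g1 v) = C1' v.
Proof.
move=> hc; rewrite /C1 /g1; mk; rewrite /C1'.
by congr (1 + _ ^+ _); field.
Qed.

Lemma X1g1 (v : pt CC 3) : C1' v != 0 -> Zset X1 (g1 v).
Proof.
move=> hc; apply/Zset1; rewrite X1E C1g1 // /g1; mk; rewrite /s3.
by field.
Qed.

Lemma gf1 (x : pt CC 4) : Zset X1 x -> C1 x != 0 -> g1 (f1 x) = x.
Proof.
move=> hx hc; rewrite /g1 C1'f1 //; apply: eq4; mk; rewrite /f1; mk => //.
- by rewrite /s3; mk; rewrite hs1 //; field.
- by field.
Qed.

Lemma fg1 (v : pt CC 3) : C1' v != 0 -> f1 (g1 v) = v.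
Proof.
move=> hc; rewrite /f1 C1g1 //; apply: eq3; mk; rewrite /g1; mk => //.
by field.
Qed.

Lemma eqv1 (l : CC) (x : pt CC 4) : l != 0 -> f1 (diag_act w1 l x) = diag_act w13 l (f1 x).
Proof.
move=> l0; rewrite /f1 C1_act //; apply: eq3; dd; mk; dd => //.
by rewrite mulrA.
Qed.

Lemma X1_GLR : Gm_linearly_rational X1 w1 origin4.
Proof.
apply: (@GLR_intro _ _ w13 N (cP1) (cP1') f1 g1 cP1 F1 cP1' G1).
- apply: ord3; rewrite /w13 /w3of /=.
  + by rewrite addNr.
  + by rewrite -PoszD.
  + by rewrite -PoszD.
- apply/Zset1; rewrite X1E /origin4 mul0r !expr0n !eqn0Ngt a2p a3p /=.
  by rewrite !addr0.
- rewrite cP1E /C1 /origin4 mul0r expr0n; case: k => [|k'] /=.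
    by have h2 : (2%:R : CC) != 0 by rewrite pnatr_eq0.
  by rewrite addr0 oner_neq0.
- exact: X1_stab.
- by move=> l x l0; rewrite !cP1E C1_act.
- by move=> l v l0; rewrite !cP1'E C1'_act.
- by move=> x hx; rewrite cP1E => hc; rewrite cP1'E C1'f1.
- by move=> v; rewrite cP1'E => hc; rewrite cP1E C1g1 //; split=> //; apply: X1g1.
- move=> x; rewrite cP1E => hc; split=> //; apply: ord3; rewrite /F1 /f1 /=; mk;
    mev; rewrite ?cP1E //; move: hc; rewrite /C1 => hc; field; exact hc.
- move=> v; rewrite cP1'E => hc; split=> //; apply: ord4; rewrite /G1 /g1 /=; mk;
    mev; rewrite ?cP1'E /sP1 /s3; mev; move: hc; rewrite /C1' /s3 => hc; field; exact hc.
- by move=> x hx; rewrite cP1E; apply: gf1.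
- by move=> v; rewrite cP1'E; apply: fg1.
- by move=> l x l0 _ _; apply: eqv1.
Qed.

End X1.

Section X2.
Variables (a2 a3 M A B : nat).
Hypotheses (a2p : (0 < a2)%N) (a3p : (0 < a3)%N) (Mp : (0 < M)%N)
  (hAB : (M.+1 * a3 * A = a2 * B + 1)%N).

Let N := (a2 * a3)%N.
Let al := (a3 * (M * A)).-1.

Lemma Ap : (0 < A)%N.
Proof. by case: A hAB => // ; rewrite muln0 addn1. Qed.

Lemma hal : al.+1 = (a3 * (M * A))%N.
Proof. by rewrite prednK // !muln_gt0 a3p Mp Ap. Qed.

Lemma hbe : (M * B * a2 = al * M.+1 + 1)%N.
Proof. have := hal; nia. Qed.

Lemma hga : (M * A * a3 = al.+1)%N.
Proof. by rewrite hal mulnC. Qed.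

Lemma pw1 (C y z : CC) : C != 0 ->
  (y * C ^+ al) ^+ M.+1 * (z / C ^+ (M * B)) ^+ a2 = y ^+ M.+1 * z ^+ a2 / C.
Proof.
move=> C0; rewrite !exprMn ?exprVn -!exprM hbe exprD expr1.
by field; nz.
Qed.

Lemma pw2 (C y t : CC) : C != 0 ->
  (y * C ^+ al) * (t / C ^+ (M * A)) ^+ a3 = y * t ^+ a3 / C.
Proof.
move=> C0; rewrite !exprMn ?exprVn -!exprM hga exprS.
by field; nz.
Qed.

Lemma pw1' (C y z : CC) : C != 0 ->
  (y / C ^+ al) ^+ M.+1 * (z * C ^+ (M * B)) ^+ a2 = y ^+ M.+1 * z ^+ a2 * C.
Proof.
move=> C0; rewrite !exprMn ?exprVn -!exprM hbe exprD expr1.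
by field; nz.
Qed.

Lemma pw2' (C y t : CC) : C != 0 ->
  (y / C ^+ al) * (t * C ^+ (M * A)) ^+ a3 = y * t ^+ a3 * C.
Proof.
move=> C0; rewrite !exprMn ?exprVn -!exprM hga exprS.
by field; nz.
Qed.

Definition C2 (x : pt CC 4) := 1 + (x i0 * x i1) ^+ M.
Definition U2 (v : pt CC 3) := - (v j0 ^+ M.+1 * v j1 ^+ a2 + v j0 * v j2 ^+ a3).
Definition C2' (v : pt CC 3) := 1 + U2 v ^+ M.
Definition f2 (x : pt CC 4) :=
  mk3 (x i1 * C2 x ^+ al) (x i2 / C2 x ^+ (M * B)) (x i3 / C2 x ^+ (M * A)).
Definition Yg (v : pt CC 3) := v j0 / C2' v ^+ al.
Definition Zg (v : pt CC 3) := v j1 * C2' v ^+ (M * B).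
Definition Tg (v : pt CC 3) := v j2 * C2' v ^+ (M * A).
Definition g2 (v : pt CC 3) :=
  mk4 (- (Yg v ^+ M * Zg v ^+ a2 + Tg v ^+ a3) / C2' v) (Yg v) (Zg v) (Tg v).

Definition cP2 : {mpoly CC[4]} := 1 + ('X_i0 * 'X_i1) ^+ M.
Definition uP : {mpoly CC[3]} :=
  - ('X_j0 ^+ M.+1 * 'X_j1 ^+ a2 + 'X_j0 * 'X_j2 ^+ a3).
Definition cP2' : {mpoly CC[3]} := 1 + uP ^+ M.
Definition hP : {mpoly CC[4]} := cP2 ^+ (M * B) * cP2 ^+ (M * A).
Definition hP' : {mpoly CC[3]} := cP2' ^+ (al * M) * cP2' ^+ al * cP2'.
Definition F2 (i : 'I_3) : {mpoly CC[4]} :=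
  match val i with
  | 0 => 'X_i1 * cP2 ^+ al * cP2 ^+ (M * B) * cP2 ^+ (M * A)
  | 1 => 'X_i2 * cP2 ^+ (M * A)
  | _ => 'X_i3 * cP2 ^+ (M * B) end.
Definition G2 (i : 'I_4) : {mpoly CC[3]} :=
  match val i with
  | 0 => - ('X_j0 ^+ M * ('X_j1 * cP2' ^+ (M * B)) ^+ a2
            + ('X_j2 * cP2' ^+ (M * A)) ^+ a3 * cP2' ^+ (al * M)) * cP2' ^+ al
  | 1 => 'X_j0 * cP2' ^+ (al * M) * cP2'
  | 2 => 'X_j1 * cP2' ^+ (M * B) * hP'
  | _ => 'X_j2 * cP2' ^+ (M * A) * hP' end.

Lemma F2_0 : F2 j0 = 'X_i1 * cP2 ^+ al * cP2 ^+ (M * B) * cP2 ^+ (M * A). Proof. by []. Qed.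
Lemma F2_1 : F2 j1 = 'X_i2 * cP2 ^+ (M * A). Proof. by []. Qed.
Lemma F2_2 : F2 j2 = 'X_i3 * cP2 ^+ (M * B). Proof. by []. Qed.
Lemma G2_0 : G2 i0 = - ('X_j0 ^+ M * ('X_j1 * cP2' ^+ (M * B)) ^+ a2
            + ('X_j2 * cP2' ^+ (M * A)) ^+ a3 * cP2' ^+ (al * M)) * cP2' ^+ al.
Proof. by []. Qed.
Lemma G2_1 : G2 i1 = 'X_j0 * cP2' ^+ (al * M) * cP2'. Proof. by []. Qed.
Lemma G2_2 : G2 i2 = 'X_j1 * cP2' ^+ (M * B) * hP'. Proof. by []. Qed.
Lemma G2_3 : G2 i3 = 'X_j2 * cP2' ^+ (M * A) * hP'. Proof. by []. Qed.

Lemma cP2E x : cP2.@[x] = C2 x.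
Proof. by rewrite /cP2; mev. Qed.
Lemma cP2'E v : cP2'.@[v] = C2' v.
Proof. by rewrite /cP2' /uP; mev. Qed.

Lemma X2E x : (X2_eq a2 a3 M.+1).@[x] =
  x i0 * C2 x + (x i1 ^+ M * x i2 ^+ a2 + x i3 ^+ a3).
Proof.
rewrite /X2_eq /vx /vy /vz /vt /=; mev.
rewrite /C2 exprS exprMn; ring.
Qed.

Let d := M.+1.
Let w2 := X2_weights a2 a3 d.
Let w23 := w3of (- (N%:Z)) ((d * a3)%N%:Z) (a2%:Z).
Let X2 := [:: X2_eq a2 a3 d].

Lemma d2_0 (l : CC) (x : pt CC 4) : diag_act w2 l x i0 = l ^+ N * x i0. Proof. by []. Qed.
Lemma d2_1 (l : CC) (x : pt CC 4) : diag_act w2 l x i1 = (l ^+ N)^-1 * x i1.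
Proof. by rewrite dA; change (w2 i1) with (- (N%:Z)); rewrite expNeg. Qed.
Lemma d2_2 (l : CC) (x : pt CC 4) : diag_act w2 l x i2 = l ^+ (d * a3) * x i2. Proof. by []. Qed.
Lemma d2_3 (l : CC) (x : pt CC 4) : diag_act w2 l x i3 = l ^+ a2 * x i3. Proof. by []. Qed.
Lemma d23_0 (l : CC) (v : pt CC 3) : diag_act w23 l v j0 = (l ^+ N)^-1 * v j0.
Proof. by rewrite dA; change (w23 j0) with (- (N%:Z)); rewrite expNeg. Qed.
Lemma d23_1 (l : CC) (v : pt CC 3) : diag_act w23 l v j1 = l ^+ (d * a3) * v j1. Proof. by []. Qed.
Lemma d23_2 (l : CC) (v : pt CC 3) : diag_act w23 l v j2 = l ^+ a2 * v j2. Proof. by []. Qed.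
Ltac dd2 := rewrite ?(d2_0, d2_1, d2_2, d2_3, d23_0, d23_1, d23_2).

Lemma Lpow (l : CC) : l ^+ (a2 * (d * a3)) = (l ^+ N) ^+ M * l ^+ N.
Proof. rewrite -exprSr -exprM; congr (_ ^+ _); rewrite /d /N; nia. Qed.

Lemma C2_act (l : CC) (x : pt CC 4) : l != 0 -> C2 (diag_act w2 l x) = C2 x.
Proof.
move=> l0; rewrite /C2; dd2.
have LN : l ^+ N != 0 by rewrite expf_neq0.
by congr (1 + _ ^+ _); field.
Qed.

Lemma U2_act (l : CC) (v : pt CC 3) : l != 0 -> U2 (diag_act w23 l v) = U2 v.
Proof.
move=> l0; rewrite /U2; dd2; rewrite !expM' Lpow [(a3 * a2)%N]mulnC.
rewrite exprMn exprVn exprSr.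
have -> : l ^+ (a2 * a3) = l ^+ N by [].
have LN : l ^+ N != 0 by rewrite expf_neq0.
have LM : (l ^+ N) ^+ M != 0 by rewrite expf_neq0.
by field; nz.
Qed.

Lemma C2'_act (l : CC) (v : pt CC 3) : l != 0 -> C2' (diag_act w23 l v) = C2' v.
Proof. by move=> l0; rewrite /C2' U2_act. Qed.

Lemma X2_stab (l : CC) (x : pt CC 4) : l != 0 -> Zset X2 x -> Zset X2 (diag_act w2 l x).
Proof.
move=> l0 /Zset1 H; apply/Zset1; move: H; rewrite !X2E C2_act //; dd2.
rewrite !expM' Lpow [(a3 * a2)%N]mulnC exprMn exprVn => H.
have -> : l ^+ (a2 * a3) = l ^+ N by [].
have LN : l ^+ N != 0 by rewrite expf_neq0.
have LM : (l ^+ N) ^+ M != 0 by rewrite expf_neq0.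
rewrite (_ : _ + _ = l ^+ N * (x i0 * C2 x + (x i1 ^+ M * x i2 ^+ a2 + x i3 ^+ a3))).
  by rewrite H mulr0.
by field; nz.
Qed.

Lemma hs2 (x : pt CC 4) : Zset X2 x -> x i1 ^+ M * x i2 ^+ a2 + x i3 ^+ a3 = - (x i0 * C2 x).
Proof.
by move=> /Zset1; rewrite X2E => H; apply/eqP; rewrite -addr_eq0 addrC H.
Qed.

Lemma U2f2 (x : pt CC 4) : Zset X2 x -> C2 x != 0 -> U2 (f2 x) = x i0 * x i1.
Proof.
move=> hx hc; rewrite /U2 /f2; mk; rewrite pw1 // pw2 // exprS.
have -> : x i1 * x i1 ^+ M * x i2 ^+ a2 / C2 x + x i1 * x i3 ^+ a3 / C2 x =
  x i1 * (x i1 ^+ M * x i2 ^+ a2 + x i3 ^+ a3) / C2 x by field.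
by rewrite hs2 //; field.
Qed.

Lemma C2'f2 (x : pt CC 4) : Zset X2 x -> C2 x != 0 -> C2' (f2 x) = C2 x.
Proof. by move=> hx hc; rewrite /C2' U2f2. Qed.

Lemma C2g2 (v : pt CC 3) : C2' v != 0 -> C2 (g2 v) = C2' v.
Proof.
move=> hc; rewrite /C2 /g2; mk; rewrite /C2'; congr (1 + _ ^+ _).
rewrite /Yg /Zg /Tg.
have -> : - ((v j0 / C2' v ^+ al) ^+ M * (v j1 * C2' v ^+ (M * B)) ^+ a2 +
     (v j2 * C2' v ^+ (M * A)) ^+ a3) / C2' v * (v j0 / C2' v ^+ al) =
  - ((v j0 / C2' v ^+ al) ^+ M.+1 * (v j1 * C2' v ^+ (M * B)) ^+ a2 +
     (v j0 / C2' v ^+ al) * (v j2 * C2' v ^+ (M * A)) ^+ a3) / C2' v.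
  by rewrite exprSr; field; nz.
rewrite pw1' // pw2' // /U2; field; nz.
Qed.

Lemma X2g2 (v : pt CC 3) : C2' v != 0 -> Zset X2 (g2 v).
Proof.
move=> hc; apply/Zset1; rewrite X2E C2g2 // /g2; mk.
by field.
Qed.

Lemma gf2 (x : pt CC 4) : Zset X2 x -> C2 x != 0 -> g2 (f2 x) = x.
Proof.
move=> hx hc.
have hY : Yg (f2 x) = x i1.
  by rewrite /Yg C2'f2 // /f2; mk; field; nz.
have hZ : Zg (f2 x) = x i2.
  by rewrite /Zg C2'f2 // /f2; mk; field; nz.
have hT : Tg (f2 x) = x i3.
  by rewrite /Tg C2'f2 // /f2; mk; field; nz.
rewrite /g2 hY hZ hT C2'f2 //; apply: eq4; mk => //.
by rewrite hs2 //; field.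
Qed.

Lemma fg2 (v : pt CC 3) : C2' v != 0 -> f2 (g2 v) = v.
Proof.
move=> hc; rewrite /f2 C2g2 //; apply: eq3; mk; rewrite /g2; mk; rewrite ?/Yg ?/Zg ?/Tg;
  field; nz.
Qed.

Lemma eqv2 (l : CC) (x : pt CC 4) : l != 0 -> f2 (diag_act w2 l x) = diag_act w23 l (f2 x).
Proof.
move=> l0; rewrite /f2 C2_act //; apply: eq3; dd2; mk; dd2 => //; by rewrite mulrA.
Qed.

Lemma X2_GLR : Gm_linearly_rational X2 w2 origin4.
Proof.
apply: (@GLR_intro _ _ w23 N cP2 cP2' f2 g2 hP F2 hP' G2).
- apply: ord3; rewrite /w23 /w3of /=.
  + by rewrite addNr.
  + by rewrite -PoszD.
  + by rewrite -PoszD.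
- apply/Zset1; rewrite X2E /origin4 mul0r !expr0n !eqn0Ngt Mp a2p a3p /=.
  by rewrite !mul0r !addr0.
- by rewrite cP2E /C2 /origin4 mul0r expr0n eqn0Ngt Mp /= addr0 oner_neq0.
- exact: X2_stab.
- by move=> l x l0; rewrite !cP2E C2_act.
- by move=> l v l0; rewrite !cP2'E C2'_act.
- by move=> x hx; rewrite cP2E => hc; rewrite cP2'E C2'f2.
- by move=> v; rewrite cP2'E => hc; rewrite cP2E C2g2 //; split=> //; apply: X2g2.
- move=> x; rewrite cP2E => hc; split.
    by rewrite /hP; mev; rewrite -/(C2 x); nz.
  apply: ord3; rewrite ?F2_0 ?F2_1 ?F2_2 /hP /f2; mk; mev; rewrite -/(C2 x); field; nz.
- move=> v; rewrite cP2'E => hc; split.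
    by rewrite /hP'; mev; rewrite -/(U2 v) -/(C2' v); nz.
  apply: ord4; rewrite ?G2_0 ?G2_1 ?G2_2 ?G2_3 /hP' /g2 /Yg /Zg /Tg; mk; mev;
    rewrite -/(U2 v) -/(C2' v); rewrite ?exprMn ?exprVn -?exprM; field; nz.
- by move=> x hx; rewrite cP2E; apply: gf2.
- by move=> v; rewrite cP2'E; apply: fg2.
- by move=> l x l0 _ _; apply: eqv2.
Qed.

End X2.

Theorem proposition3p5 (a2 a3 k : nat) :
  (0 < a2)%N -> (0 < a3)%N -> (0 < k)%N -> coprime a2 a3 ->
  Gm_linearly_rational [:: X1_eq a2 a3 k] (X1_weights a2 a3) origin4 /\
  (forall d : nat, (2 <= d)%N -> coprime (d * a3) a2 ->
     Gm_linearly_rational [:: X2_eq a2 a3 d] (X2_weights a2 a3 d) origin4).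
Proof.
move=> a2p a3p kp _; split.
  by case: k kp => // k' _; apply: X1_GLR.
case=> [|[|M]] // _ cop.
have m0 : (0 < M.+2 * a3)%N by rewrite muln_gt0 a3p.
have [b _ hb] := Bezoutl a2 m0.
rewrite (eqP cop) in hb; case/dvdnP: hb => A hA.
have hAB : (M.+2 * a3 * A = a2 * b + 1)%N by nia.
exact: (@X2_GLR a2 a3 M.+1 A b a2p a3p isT hAB).
Qed.
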